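(* Let $\lambda \geq 0$, $0 \leq \gamma \leq 1$, $0\leq\beta<1$ and $\tau \in \mathbb{C}\setminus\{0\}$. Let $f(z)=z+\sum_{k=2}^{\infty}a_kz^k$ belong to $\Theta_{\Sigma}(\tau,\lambda,\gamma,0;\beta)$ (the case $\delta=0$). Then $$|a_2| \leq \min\left\{\frac{2|\tau|(1-\beta)}{1+\lambda+\gamma+5\lambda\gamma},\ \sqrt{\frac{2|\tau|(1-\beta)}{1+2(\lambda+\gamma+5\lambda\gamma)}}\right\}\quad\text{and}\quad |a_3| \leq \frac{2|\tau|(1-\beta)}{1+2(\lambda+\gamma+5\lambda\gamma)}.$$
   Context: Let $\mathbb{U}=\{z\in\mathbb{C}:|z|<1\}$. $\Sigma$ denotes the class of bi-univalent functions: functions $f(z)=z+\sum_{k=2}^\infty a_kz^k$ analytic and univalent in $\mathbb{U}$ whose inverse $f^{-1}$ extends to a univalent function $g$ on $\mathbb{U}$; this $g$ has the expansion $g(w)=w-a_2w^2+(2a_2^2-a_3)w^3-\cdots$. For $\delta\in\mathbb{N}_0$ and $h(z)=z+\sum_{k\ge2}c_kz^k$ analytic in $\mathbb{U}$, the Ruscheweyh derivative is $\mathcal{R}^\delta h(z)=z+\sum_{k=2}^{\infty}\frac{\Gamma(\delta+k)}{\Gamma(k)\Gamma(\delta+1)}c_kz^k$ (for $\delta=0$ it is the identity). For such $h$ and parameters $\lambda,\gamma,\tau\neq0,\delta$, put $$J_h(z)=1+\frac{1}{\tau}\Big[(1-\lambda)(1-\gamma)\frac{\mathcal{R}^\delta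 h(z)}{z}+(\lambda(\gamma+1)+\gamma)(\mathcal{R}^\delta h)'(z)+\lambda\gamma\big(z(\mathcal{R}^\delta h)''(z)-2\big)-1\Big].$$ For $0\le\beta<1$, $\Theta_{\Sigma}(\tau,\lambda,\gamma,\delta;\beta)$ is the set of $f\in\Sigma$ such that $\operatorname{Re}J_f(z)>\beta$ for all $z\in\mathbb{U}$ and $\operatorname{Re}J_g(w)>\beta$ for all $w\in\mathbb{U}$, where $g$ is the extension of $f^{-1}$ to $\mathbb{U}$. *)

(* Defs.v *)
From Stdlib Require Import Reals Factorial.
From Coquelicot Require Import Coquelicot.
Open Scope C_scope.

Definition in_U (z : C) : Prop := (Cmod z < 1)%R.

Definition normalized_series (h : C -> C) (c : nat -> C) : Prop :=
  c 0%nat = 0 /\ c 1%nat = 1 /\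
  forall z, in_U z -> is_series (fun k => c k * z ^ k) (h z).

(* Sigma: bi-univalent functions.  f is analytic (normalized) and univalent
   in U, and f^{-1} extends to a univalent (analytic, injective) g on U,
   i.e. g(f z) = z whenever z and f z lie in U. *)
Definition univalent_on_U (h : C -> C) : Prop :=
  forall z w, in_U z -> in_U w -> h z = h w -> z = w.

Definition extends_inverse (f g : C -> C) : Prop :=
  forall z, in_U z -> in_U (f z) -> g (f z) = z.

Definition bi_univalent (f : C -> C) (a : nat -> C) (g : C -> C) (b : nat -> C)
  : Prop :=
  normalized_series f a /\ univalent_on_U f /\
  normalized_series g b /\ univalent_on_U g /\ extends_inverse f g.

(* Coefficients of the Ruscheweyh derivative R^delta h:
   R^delta h (z) = z + sum_{k>=2} Gamma(delta+k)/(Gamma(k) Gamma(delta+1)) c_k z^k,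
   with Gamma(n) = (n-1)! at positive integers. *)
Definition rusch_coef (delta : nat) (c : nat -> C) (k : nat) : C :=
  match k with
  | 0%nat => 0
  | 1%nat => 1
  | _ => RtoC (INR (fact (delta + k - 1)) /
                (INR (fact (k - 1)) * INR (fact delta)))%R * c k
  end.

(* J_h(z), given the values R = R^delta h(z), R1 = (R^delta h)'(z),
   R2 = (R^delta h)''(z). *)
Definition J_value (tau : C) (lam gam : R) (z Rz R1 R2 : C) : C :=
  1 + / tau *
    ( RtoC ((1 - lam) * (1 - gam))%R * (Rz / z)
    + RtoC (lam * (gam + 1) + gam)%R * R1
    + RtoC (lam * gam)%R * (z * R2 - 2)
    - 1 ).

(* Re J_h(z) > beta for all z in U (z <> 0: at z = 0 the term R^delta h(z)/z
   is understood by its removable singularity). *)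
Definition J_condition (tau : C) (lam gam : R) (delta : nat) (beta : R)
  (c : nat -> C) : Prop :=
  exists Rh Rh1 Rh2 : C -> C,
    forall z, in_U z ->
      is_series (fun k => rusch_coef delta c k * z ^ k) (Rh z) /\
      is_derive Rh z (Rh1 z) /\ is_derive Rh1 z (Rh2 z) /\
      (z <> 0 -> (beta < Re (J_value tau lam gam z (Rh z) (Rh1 z) (Rh2 z)))%R).

Definition Theta_Sigma (tau : C) (lam gam : R) (delta : nat) (beta : R)
  (f : C -> C) (a : nat -> C) : Prop :=
  exists (g : C -> C) (b : nat -> C),
    bi_univalent f a g b /\
    J_condition tau lam gam delta beta a /\
    J_condition tau lam gam delta beta b.

(* Main.v *)
Require Import Defs.
From Stdlib Require Import Reals Lra Lia Factorial.
From Coquelicot Require Import Coquelicot.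
Open Scope C_scope.

Lemma ser_norm_le (u : nat -> C) (v : nat -> R) Su T :
  is_series u Su -> is_series v T -> (forall n, (Cmod (u n) <= v n)%R) ->
  (Cmod Su <= T)%R.
Proof.
  intros HS HT Hb.
  assert (Hp : forall n, (Cmod (sum_n u n) <= sum_n v n)%R).
  { induction n.
    - rewrite !sum_O. apply Hb.
    - rewrite !sum_Sn. eapply Rle_trans; [apply Cmod_triangle|].
      change (plus (sum_n v n) (v (S n))) with (sum_n v n + v (S n))%R.
      specialize (Hb (S n)). lra. }
  assert (H1 : is_lim_seq (fun n => Cmod (sum_n u n)) (Cmod Su)).
  { unfold is_lim_seq. simpl.
    exact (filterlim_comp _ _ _ (sum_n u) (@norm C_AbsRing C_NormedModule) eventually (locally Su) (locally (Cmod Su)) HS (@filterlim_norm C_AbsRing C_NormedModule Su)). }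
  assert (H2 : is_lim_seq (sum_n v) T) by (exact HT).
  pose proof (is_lim_seq_le _ _ _ _ Hp H1 H2) as H. simpl in H. exact H.
Qed.

Lemma CnormE (x : C) : @norm C_AbsRing C_NormedModule x = Cmod x.
Proof. reflexivity. Qed.

Lemma bnd_of_series (c : nat -> C) (F : C -> C) :
  (forall z, in_U z -> z <> 0 -> is_series (fun k => c k * z ^ k) (F z)) ->
  forall s, (0 < s < 1)%R -> exists M, forall k, (Cmod (c k) * s ^ k <= M)%R.
Proof.
  intros H s Hs.
  assert (Hz : in_U (RtoC s)) by (unfold in_U; rewrite Cmod_R, Rabs_pos_eq; lra).
  assert (Hnz : RtoC s <> 0).
  { intro E. apply (f_equal fst) in E. simpl in E. lra. }
  specialize (H _ Hz Hnz).
  destruct (filterlim_bounded (sum_n (fun k => c k * RtoC s ^ k))) as [M HM].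
  { exists (F s). exact H. }
  exists (2 * M)%R. intros k.
  assert (E : (Cmod (c k) * s ^ k)%R = Cmod (c k * RtoC s ^ k)).
  { rewrite Cmod_mult, Cmod_pow, Cmod_R, Rabs_pos_eq; lra. }
  rewrite E.
  destruct k.
  - pose proof (HM 0%nat) as H0. rewrite sum_O, CnormE in H0.
    assert (0 <= Cmod (c 0%nat * RtoC s ^ 0))%R by apply Cmod_ge_0. lra.
  - pose proof (HM (S k)) as H1. pose proof (HM k) as H0.
    rewrite sum_Sn in H1.
    set (A := sum_n (fun k0 : nat => c k0 * RtoC s ^ k0) k) in *.
    set (B := c (S k) * RtoC s ^ S k) in *.
    assert (EB : B = plus A B - A).
    { change (plus A B) with (A + B). ring. }
    rewrite EB. eapply Rle_trans; [apply Cmod_triangle|].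
    rewrite Cmod_opp. rewrite CnormE in H0, H1. lra.
Qed.
Lemma ex_series_sq_geom (q : R) : 0 < q < 1 ->
  ex_series (fun m => ((INR m + 2) ^ 2 * q ^ m)%R).
Proof.
  Local Open Scope R_scope.
  intros Hq.
  assert (Hpos : forall m, 0 < (INR m + 2) ^ 2 * q ^ m).
  { intros m. apply Rmult_lt_0_compat.
    - pose proof (pos_INR m). apply pow_lt. lra.
    - apply pow_lt; lra. }
  eapply ex_series_ext; [| apply (ex_series_DAlembert (fun m => ((INR m + 2) ^ 2 * q ^ m)%R) q)].
  - intros n. simpl. rewrite Rabs_pos_eq; [reflexivity|]. apply Rlt_le, Hpos.
  - lra.
  - intros n E. specialize (Hpos n). lra.
  - assert (Hl : is_lim_seq (fun n => / (INR n + 2)) 0).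
    { replace (Finite 0) with (Rbar_inv p_infty) by reflexivity.
      apply is_lim_seq_inv; [| discriminate].
      eapply is_lim_seq_plus; [apply is_lim_seq_INR | apply is_lim_seq_const |].
      constructor. }
    assert (Hl2 : is_lim_seq (fun n => (1 + / (INR n + 2)) * (1 + / (INR n + 2)) * q) (1 * 1 * q)).
    { apply is_lim_seq_mult'; [|apply is_lim_seq_const].
      assert (H1 : is_lim_seq (fun n => 1 + / (INR n + 2)) 1).
      { pose proof (is_lim_seq_plus' _ _ 1 0 (is_lim_seq_const 1) Hl) as H. rewrite Rplus_0_r in H. exact H. }
      apply is_lim_seq_mult'; exact H1. }
    replace (1 * 1 * q) with q in Hl2 by ring.
    eapply is_lim_seq_ext; [| exact Hl2].
    intros n. pose proof (pos_INR n) as Hn.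
    assert (Hp0 := Hpos n). assert (Hp1 := Hpos (S n)).
    rewrite Rabs_pos_eq.
    + rewrite S_INR. simpl. field. split; [|lra]. apply Rgt_not_eq. apply pow_lt; lra.
    + apply Rlt_le. unfold Rdiv. apply Rmult_lt_0_compat; [exact Hp1 | apply Rinv_0_lt_compat; exact Hp0].
Qed.
Lemma Dk_bound (z t : C) (m : nat) :
  (Cmod ((z + t) ^ (S (S m)) - z ^ (S (S m)) - RtoC (INR (S (S m))) * t * z ^ (S m))%C
   <= (INR m + 2) ^ 2 * Cmod t ^ 2 * (Cmod z + Cmod t) ^ m)%R.
Proof.
  Local Open Scope R_scope.
  induction m.
  - replace ((z + t) ^ 2 - z ^ 2 - RtoC (INR 2) * t * z ^ 1)%C with (t * t)%C.
    + rewrite Cmod_mult. simpl. nra.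
    + simpl. rewrite RtoC_plus. ring.
  - set (D := ((z + t) ^ S (S m) - z ^ S (S m) - RtoC (INR (S (S m))) * t * z ^ S m)%C) in *.
    replace ((z + t) ^ S (S (S m)) - z ^ S (S (S m)) - RtoC (INR (S (S (S m)))) * t * z ^ S (S m))%C
      with ((z + t) * D + RtoC (INR (S (S m))) * (t * t) * z ^ S m)%C.
    2:{ unfold D. rewrite (S_INR (S (S m))), RtoC_plus. rewrite !Cpow_S. ring. }
    eapply Rle_trans; [apply Cmod_triangle|].
    rewrite !Cmod_mult, Cmod_pow, Cmod_R, Rabs_pos_eq by apply pos_INR.
    pose proof (Cmod_triangle z t) as Ht.
    pose proof (Cmod_ge_0 z) as Hz. pose proof (Cmod_ge_0 t) as Htt.
    pose proof (Cmod_ge_0 D) as HD.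
    set (r := (Cmod z + Cmod t)%R) in *.
    assert (Hzr : (Cmod z ^ S m <= r ^ S m)%R). { apply pow_incr. unfold r. split; [exact Hz|]. lra. }
    assert (HP : (0 <= r ^ m)%R) by (apply pow_le; unfold r; lra).
    assert (Hr0 : (Cmod z <= r)%R) by (unfold r; lra).
    rewrite !S_INR. simpl in Hzr |- *.
    pose proof (pos_INR m) as Hm.
    set (P := (r ^ m)%R) in *. set (T := Cmod t) in *. set (Z := (Cmod z ^ m)%R) in *.
    set (W := Cmod (z + t)) in *.
    assert (H1 : (W * Cmod D <= r * ((INR m + 2) ^ 2 * T ^ 2 * P))%R).
    { apply Rmult_le_compat; [unfold W; apply Cmod_ge_0 | lra | lra | lra]. }
    assert (H2 : (Cmod z * Z <= r * P)%R) by exact Hzr.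
    assert (H3 : ((INR m + 1 + 1) * (T * T) * (Cmod z * Z) <= (INR m + 1 + 1) * (T * T) * (r * P))%R).
    { apply Rmult_le_compat_l; [| exact H2]. apply Rmult_le_pos; nra. }
    assert (H4: (0 <= T * T * (r * P))%R) by (apply Rmult_le_pos; [nra| apply Rmult_le_pos; lra]).
    simpl in H1. nra.
Qed.

Open Scope C_scope.

Lemma shift1 (a : nat -> C) (l : C) :
  is_series a l -> is_series (fun k => a (S k)) (l - a 0%nat).
Proof.
  intros H. apply is_series_incr_1.
  match goal with |- is_series _ ?X => replace X with l; [exact H|] end.
  change (l = l - a 0%nat + a 0%nat). ring.
Qed.

Lemma is_series_eq (u : nat -> C) (l l' : C) : is_series u l -> l = l' -> is_series u l'.
Proof. intros H E; subst; exact H. Qed.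

Lemma geo_shift (c : nat -> C) (M s r : R) :
  (0 < r)%R -> (0 < s)%R -> (forall k, Cmod (c k) * s ^ k <= M)%R ->
  forall j k, (Cmod (c (j + k)%nat) * r ^ k <= (M / s ^ j) * (r / s) ^ k)%R.
Proof.
  intros Hr Hs HM j k.
  specialize (HM (j + k)%nat). rewrite pow_add in HM.
  assert (Hsj : (0 < s ^ j)%R) by (apply pow_lt; lra).
  assert (Hsk : (0 < s ^ k)%R) by (apply pow_lt; lra).
  assert (E : (r ^ k = s ^ k * (r / s) ^ k)%R).
  { rewrite <- Rpow_mult_distr. f_equal. field. lra. }
  rewrite E.
  assert (H1 : (Cmod (c (j + k)%nat) * s ^ k <= M / s ^ j)%R).
  { apply (Rmult_le_reg_r (s ^ j)); [exact Hsj|].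
    replace (M / s ^ j * s ^ j)%R with M by (field; lra).
    replace (Cmod (c (j + k)%nat) * s ^ k * s ^ j)%R with (Cmod (c (j + k)%nat) * (s ^ j * s ^ k))%R by ring.
    exact HM. }
  assert (H2 : (0 <= (r / s) ^ k)%R) by (apply pow_le; apply Rlt_le, Rdiv_lt_0_compat; lra).
  rewrite <- Rmult_assoc. apply Rmult_le_compat_r; [exact H2 | exact H1].
Qed.

Lemma deriv_series (c : nat -> C) (F : C -> C) (z L : C) :
  (forall w, in_U w -> is_series (fun k => c k * w ^ k) (F w)) ->
  in_U z -> is_derive F z L ->
  is_series (fun k => RtoC (INR (S k)) * c (S k) * z ^ k) L.
Proof.
  intros HF Hz Hder.
  unfold in_U in Hz.
  pose proof (Cmod_ge_0 z) as Hz0.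
  set (r0 := ((Cmod z + 1) / 2)%R).
  set (s := ((r0 + 1) / 2)%R).
  assert (Hr0 : (0 < r0 /\ Cmod z < r0 /\ r0 < s /\ s < 1)%R) by (unfold s, r0; lra).
  destruct (bnd_of_series c F (fun w Hw _ => HF w Hw) s) as [M HM]; [lra|].
  assert (HM0 : (0 <= M)%R).
  { specialize (HM 0%nat). pose proof (Cmod_ge_0 (c 0%nat)). simpl in HM. lra. }
  set (q := (r0 / s)%R).
  assert (Hq : (0 < q < 1)%R).
  { unfold q. split; [apply Rdiv_lt_0_compat; lra|].
    apply (Rmult_lt_reg_r s); [lra|]. unfold Rdiv. rewrite Rmult_assoc, Rinv_l; lra. }
  pose proof (geo_shift c M s r0 ltac:(lra) ltac:(lra) HM) as G.
  assert (HexD : ex_series (fun k => RtoC (INR (S k)) * c (S k) * z ^ k)).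
  { apply (@ex_series_le C_AbsRing C_CompleteNormedModule _
             (fun k => (M / s) * ((INR k + 2) ^ 2 * q ^ k))%R).
    - intros k. rewrite CnormE, !Cmod_mult, Cmod_pow, Cmod_R, Rabs_pos_eq by apply pos_INR.
      specialize (G 0%nat (S k)). simpl plus in G.
      assert (Hzk : (Cmod z ^ k <= r0 ^ k)%R) by (apply pow_incr; lra).
      assert (Hk : (INR (S k) <= (INR k + 2) ^ 2)%R).
      { rewrite S_INR. pose proof (pos_INR k). nra. }
      assert (Hc : (Cmod (c (S k)) * r0 ^ k <= M / s * q ^ k)%R).
      { simpl in G. fold q in G.
        apply (Rmult_le_reg_r r0); [lra|].
        replace (Cmod (c (S k)) * r0 ^ k * r0)%R with (Cmod (c (S k)) * (r0 * r0 ^ k))%R by ring.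
        eapply Rle_trans; [exact G|]. right. unfold q. field; repeat split; lra. }
      pose proof (Cmod_ge_0 (c (S k))).
      assert (0 <= Cmod z ^ k)%R by (apply pow_le; lra).
      assert (0 <= q ^ k)%R by (apply pow_le; lra).
      assert (0 <= M / s)%R by (apply Rdiv_le_0_compat; lra).
      pose proof (pos_INR (S k)).
      assert (Hb1 : (Cmod (c (S k)) * Cmod z ^ k <= M / s * q ^ k)%R).
      { eapply Rle_trans; [| exact Hc]. apply Rmult_le_compat_l; lra. }
      assert (Hb2 : (0 <= Cmod (c (S k)) * Cmod z ^ k)%R) by (apply Rmult_le_pos; lra).
      replace (INR (S k) * Cmod (c (S k)) * Cmod z ^ k)%R with (INR (S k) * (Cmod (c (S k)) * Cmod z ^ k))%R by ring.
      replace (M / s * ((INR k + 2) ^ 2 * q ^ k))%R with ((INR k + 2) ^ 2 * (M / s * q ^ k))%R by ring.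
      apply Rmult_le_compat; lra.
    - apply (@ex_series_scal_l R_AbsRing R_NormedModule). apply ex_series_sq_geom. exact Hq. }
  destruct HexD as [D HD].
  set (Kq := Series (fun m => ((INR m + 2) ^ 2 * q ^ m)%R)).
  assert (HKq : is_series (fun m => ((INR m + 2) ^ 2 * q ^ m)%R) Kq).
  { apply Series_correct, ex_series_sq_geom, Hq. }
  set (K := (M / s ^ 2 * Kq)%R).
  assert (Hest : forall t : C, (Cmod t <= r0 - Cmod z)%R ->
            (Cmod (F (z + t) - F z - t * D)%C <= Cmod t ^ 2 * (M / s ^ 2) * Kq)%R).
  { intros t Ht.
    pose proof (Cmod_ge_0 t) as Ht0.
    assert (Hzt : in_U (z + t)).
    { unfold in_U. pose proof (Cmod_triangle z t). lra. }
    pose proof (shift1 _ _ (shift1 _ _ (HF (z + t) Hzt))) as h1.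
    pose proof (shift1 _ _ (shift1 _ _ (HF z (Hz)))) as h2.
    pose proof (shift1 _ _ (@is_series_scal C_AbsRing C_NormedModule t _ _ HD)) as h3.
    pose proof (is_series_minus _ _ _ _ (is_series_minus _ _ _ _ h1 h2) h3) as hc.
    match type of hc with is_series _ ?l =>
      assert (hc2 : is_series (fun m => c (S (S m)) * ((z + t) ^ S (S m) - z ^ S (S m) - RtoC (INR (S (S m))) * t * z ^ S m)) l) end.
    { revert hc. apply is_series_ext. intros m. cbv beta.
        match goal with |- plus (plus ?A (opp ?B)) (opp (scal ?T ?X)) = _ =>
          transitivity (A + - B + - (T * X)); [reflexivity|] end.
        match goal with |- ?x = ?y => change (@eq C x y) end.
        rewrite !Cpow_S. ring. }
    clear hc.
    eapply ser_norm_le.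
    - eapply is_series_eq; [exact hc2|].
      + cbv beta.
        match goal with |- plus (plus ?A (opp ?B)) (opp ?Cc) = ?Y =>
          change (@eq C (A + - B + - Cc) Y) end.
        unfold scal. simpl. change (mult t D) with (t * D). change (mult t (1 * c 1%nat * 1)) with (t * (1 * c 1%nat * 1)). ring.
    - apply (@is_series_scal R_AbsRing R_NormedModule (Cmod t ^ 2 * (M / s ^ 2))%R _ _ HKq).
    - intros m. cbv beta.
      rewrite Cmod_mult.
      pose proof (Dk_bound z t m) as Hd.
      pose proof (G 2%nat m) as Gm. simpl plus in Gm. fold q in Gm.
      change (scal (Cmod t ^ 2 * (M / s ^ 2))%R ((INR m + 2) ^ 2 * q ^ m)%R)
        with (Cmod t ^ 2 * (M / s ^ 2) * ((INR m + 2) ^ 2 * q ^ m))%R.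
      pose proof (Cmod_ge_0 (c (S (S m)))) as Hc0.
      
      assert (Hrho : ((Cmod z + Cmod t) ^ m <= r0 ^ m)%R) by (apply pow_incr; lra).
      assert (Hp0 : (0 <= (Cmod z + Cmod t) ^ m)%R) by (apply pow_le; lra).
      assert (HA : (0 <= (INR m + 2) ^ 2 * Cmod t ^ 2)%R).
      { apply Rmult_le_pos; apply pow2_ge_0. }
      eapply Rle_trans. { apply Rmult_le_compat_l; [exact Hc0 | exact Hd]. }
      eapply Rle_trans.
      { apply Rmult_le_compat_l; [exact Hc0|].
        apply Rmult_le_compat_l; [exact HA | exact Hrho]. }
      replace (Cmod (c (S (S m))) * ((INR m + 2) ^ 2 * Cmod t ^ 2 * r0 ^ m))%R
        with ((INR m + 2) ^ 2 * Cmod t ^ 2 * (Cmod (c (S (S m))) * r0 ^ m))%R by ring.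
      replace (Cmod t ^ 2 * (M / s ^ 2) * ((INR m + 2) ^ 2 * q ^ m))%R
        with ((INR m + 2) ^ 2 * Cmod t ^ 2 * (M / s ^ 2 * q ^ m))%R by ring.
      apply Rmult_le_compat_l; [exact HA | exact Gm].
  }
  set (Ka := Rabs (M / s ^ 2 * Kq)).
  assert (HKa : (0 <= Ka)%R) by apply Rabs_pos.
  assert (Hsmall : forall eps, (0 < eps)%R -> (Cmod (L - D) <= 2 * eps)%R).
  { intros eps Heps.
    destruct Hder as [_ Hd]. specialize (Hd z (fun P H => H) (mkposreal eps Heps)).
    destruct Hd as [d Hdd].
    pose proof (cond_pos d) as Hd0.
    set (t := Rmin (d / 2) (Rmin (r0 - Cmod z) (eps / (Ka + 1)))).
    assert (Ht1 : (t <= d / 2)%R) by apply Rmin_l.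
    assert (Ht2 : (t <= r0 - Cmod z)%R) by (eapply Rle_trans; [apply Rmin_r | apply Rmin_l]).
    assert (Ht3 : (t <= eps / (Ka + 1))%R) by (eapply Rle_trans; [apply Rmin_r | apply Rmin_r]).
    assert (Ht0 : (0 < t)%R).
    { unfold t. apply Rmin_glb_lt; [lra|]. apply Rmin_glb_lt; [lra|].
      apply Rdiv_lt_0_compat; lra. }
    assert (Et : minus (z + RtoC t) z = RtoC t).
    { change (z + RtoC t - z = RtoC t). ring. }
    assert (Hb : @ball (AbsRing_UniformSpace C_AbsRing) z d (z + RtoC t)).
    { change (Rlt (Cmod (minus (z + RtoC t)%C z)) d). rewrite Et. rewrite Cmod_R, Rabs_pos_eq; lra. }
    pose proof (Hdd _ Hb) as H1.
    assert (H1' : (Cmod (F (z + RtoC t) - F z - (z + RtoC t - z) * L)%C <= eps * Cmod (z + RtoC t - z))%R) by exact H1.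
    replace (z + RtoC t - z) with (RtoC t) in H1' by ring.
    rewrite Cmod_R, Rabs_pos_eq in H1' by lra.
    assert (Hct : (Cmod (RtoC t) <= r0 - Cmod z)%R) by (rewrite Cmod_R, Rabs_pos_eq; lra).
    pose proof (Hest (RtoC t) Hct) as H2.
    rewrite Cmod_R, Rabs_pos_eq in H2 by lra.
    assert (E : RtoC t * (L - D) = (F (z + RtoC t) - F z - RtoC t * D) - (F (z + RtoC t) - F z - RtoC t * L)) by ring.
    assert (H3 : (t * Cmod (L - D) <= t ^ 2 * (M / s ^ 2) * Kq + eps * t)%R).
    { replace (t * Cmod (L - D))%R with (Cmod (RtoC t * (L - D))).
      2:{ rewrite Cmod_mult, Cmod_R, Rabs_pos_eq; lra. }
      rewrite E. eapply Rle_trans; [apply Cmod_triangle|]. rewrite Cmod_opp. lra. }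
    assert (H4 : (Cmod (L - D) <= t * (M / s ^ 2 * Kq) + eps)%R).
    { apply (Rmult_le_reg_l t); [lra|]. nra. }
    assert (H5 : (M / s ^ 2 * Kq <= Ka)%R) by apply Rle_abs.
    assert (H6 : (t * Ka <= eps)%R).
    { apply (Rmult_le_reg_r (/ (Ka + 1))). { apply Rinv_0_lt_compat; lra. }
      assert (H7 : (t * (Ka + 1) <= eps)%R).
      { apply (Rmult_le_compat_r (Ka + 1)) in Ht3; [|lra].
        replace (eps / (Ka + 1) * (Ka + 1))%R with eps in Ht3 by (field; lra). exact Ht3. }
      nra. }
    nra. }
  assert (HLD : Cmod (L - D) = 0%R).
  { pose proof (Cmod_ge_0 (L - D)).
    destruct (Req_dec (Cmod (L - D)) 0) as [?|Hne]; [assumption|].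
    specialize (Hsmall (Cmod (L - D) / 4)%R ltac:(lra)). lra. }
  apply Cmod_eq_0 in HLD.
  assert (E : @eq C L D).
  { transitivity (L - D + D); [ring|]. rewrite HLD. ring. }
  rewrite E. exact HD.
Qed.

Open Scope C_scope.

Fixpoint fs (f : nat -> C) (n : nat) : C :=
  match n with 0%nat => 0 | S n => fs f n + f n end.

Fixpoint fsR (f : nat -> R) (n : nat) : R :=
  match n with 0%nat => 0%R | S n => (fsR f n + f n)%R end.

Lemma fs_ext f g n : (forall j, (j < n)%nat -> f j = g j) -> fs f n = fs g n.
Proof.
  induction n; intros H; simpl; [reflexivity|].
  rewrite IHn by (intros; apply H; lia). rewrite H by lia. reflexivity.
Qed.

Lemma fs_norm f n : (Cmod (fs f n) <= fsR (fun j => Cmod (f j)) n)%R.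
Proof.
  induction n; simpl.
  - rewrite Cmod_0. lra.
  - eapply Rle_trans; [apply Cmod_triangle|]. lra.
Qed.

Lemma fs_Re f n : Re (fs f n) = fsR (fun j => Re (f j)) n.
Proof.
  induction n; cbn [fs fsR]; [reflexivity|]. rewrite re_plus, IHn. reflexivity.
Qed.

Lemma fsR_le f g n : (forall j, (j < n)%nat -> (f j <= g j)%R) -> (fsR f n <= fsR g n)%R.
Proof.
  induction n; intros H; simpl; [lra|].
  pose proof (H n ltac:(lia)). pose proof (IHn ltac:(intros; apply H; lia)). lra.
Qed.

Lemma fs_const1 n : fs (fun _ => 1) n = RtoC (INR n).
Proof.
  induction n; simpl fs; [reflexivity|]. rewrite IHn, S_INR, RtoC_plus. reflexivity.
Qed.

Lemma fs_geom (x : C) n : (x - 1) * fs (fun j => x ^ j) n = x ^ n - 1.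
Proof.
  induction n; simpl fs; [simpl; ring|].
  rewrite Cmult_plus_distr_l, IHn. simpl. ring.
Qed.

Definition om (N : nat) : C := (cos (2 * PI / INR N), sin (2 * PI / INR N)).

Lemma demoivre (a : R) (n : nat) : ((cos a, sin a) : C) ^ n = (cos (INR n * a), sin (INR n * a)).
Proof.
  induction n.
  - simpl. rewrite Rmult_0_l, cos_0, sin_0. reflexivity.
  - rewrite Cpow_S, IHn, S_INR.
    replace ((INR n + 1) * a)%R with (a + INR n * a)%R by ring.
    rewrite cos_plus, sin_plus.
    apply injective_projections; simpl; ring.
Qed.

Lemma om_pow N n : om N ^ n = (cos (INR n * (2 * PI / INR N)), sin (INR n * (2 * PI / INR N))).
Proof. apply demoivre. Qed.

Lemma Cmod_cs a : Cmod (cos a, sin a) = 1%R.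
Proof.
  unfold Cmod. simpl. pose proof (sin2_cos2 a) as H. unfold Rsqr in H.
  replace (cos a * (cos a * 1) + sin a * (sin a * 1))%R with 1%R by nra. apply sqrt_1.
Qed.

Lemma Cmod_om_pow N n : Cmod (om N ^ n) = 1%R.
Proof. rewrite om_pow. apply Cmod_cs. Qed.

Lemma om_N N : (0 < N)%nat -> om N ^ N = 1.
Proof.
  intros HN. rewrite om_pow.
  replace (INR N * (2 * PI / INR N))%R with (2 * PI)%R.
  - rewrite cos_2PI, sin_2PI. reflexivity.
  - field. apply not_0_INR. lia.
Qed.

Lemma om_ne1 N n : (0 < n < N)%nat -> om N ^ n <> 1.
Proof.
  intros Hn E. rewrite om_pow in E.
  apply (f_equal fst) in E. simpl in E.
  set (x := (INR n * (2 * PI / INR N))%R) in *.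
  assert (HN : (0 < INR N)%R) by (apply lt_0_INR; lia).
  assert (Hn0 : (0 < INR n)%R) by (apply lt_0_INR; lia).
  assert (HnN : (INR n < INR N)%R) by (apply lt_INR; lia).
  pose proof PI_RGT_0.
  assert (Hx : (0 < x / 2 < PI)%R).
  { unfold x. split.
    - apply Rdiv_lt_0_compat; [|lra]. apply Rmult_lt_0_compat; [lra|].
      apply Rdiv_lt_0_compat; lra.
    - replace (INR n * (2 * PI / INR N) / 2)%R with (PI * (INR n / INR N))%R by (field; lra).
      rewrite <- (Rmult_1_r PI) at 2. apply Rmult_lt_compat_l; [lra|].
      apply (Rmult_lt_reg_r (INR N)); [lra|]. unfold Rdiv. rewrite Rmult_assoc, Rinv_l; lra. }
  pose proof (sin_gt_0 _ (proj1 Hx) (proj2 Hx)) as Hs.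
  replace x with (2 * (x / 2))%R in E by field.
  rewrite cos_2a_sin in E. nra.
Qed.

Lemma om_pow_mod N a : (0 < N)%nat -> om N ^ a = om N ^ (a mod N).
Proof.
  intros HN.
  rewrite (Nat.div_mod_eq a N) at 1.
  rewrite Cpow_add_r, Cpow_mult_r, om_N by exact HN.
  rewrite Cpow_1_l. ring.
Qed.

Lemma rsum_div N p : (0 < N)%nat -> (p mod N = 0)%nat ->
  fs (fun j => (om N ^ p) ^ j) N = RtoC (INR N).
Proof.
  intros HN Hp.
  rewrite (om_pow_mod N p HN), Hp. simpl Cpow at 1.
  rewrite <- fs_const1. apply fs_ext. intros. apply Cpow_1_l.
Qed.

Lemma rsum_ndiv N p : (0 < N)%nat -> (p mod N <> 0)%nat ->
  fs (fun j => (om N ^ p) ^ j) N = 0.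
Proof.
  intros HN Hp.
  set (x := om N ^ p).
  assert (Hx1 : x <> 1).
  { unfold x. rewrite (om_pow_mod N p HN). apply om_ne1.
    pose proof (Nat.mod_upper_bound p N ltac:(lia)). lia. }
  assert (HxN : x ^ N = 1).
  { unfold x. rewrite <- Cpow_mult_r, Nat.mul_comm, Cpow_mult_r, om_N by exact HN.
    apply Cpow_1_l. }
  pose proof (fs_geom x N) as G. rewrite HxN in G.
  assert (Hx0 : x - 1 <> 0).
  { intro E. apply Hx1. replace x with (x - 1 + 1) by ring. rewrite E. ring. }
  replace (fs (fun j => x ^ j) N) with (/ (x - 1) * ((x - 1) * fs (fun j => x ^ j) N)).
  - rewrite G. ring.
  - field. exact Hx0.
Qed.

Lemma conj_om N : (0 < N)%nat -> Cconj (om N) = om N ^ (N - 1).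
Proof.
  intros HN.
  assert (E1 : om N * Cconj (om N) = 1).
  { rewrite <- Cmod2_conj. replace (om N) with (om N ^ 1) by apply Cpow_1_r.
    rewrite Cmod_om_pow. simpl. apply injective_projections; simpl; ring. }
  assert (E2 : om N * om N ^ (N - 1) = 1).
  { rewrite <- Cpow_S. replace (S (N - 1)) with N by lia. apply om_N, HN. }
  transitivity (Cconj (om N) * (om N * om N ^ (N - 1))).
  - rewrite E2. ring.
  - replace (Cconj (om N) * (om N * om N ^ (N - 1))) with ((om N * Cconj (om N)) * om N ^ (N - 1)) by ring.
    rewrite E1. ring.
Qed.

Open Scope C_scope.

Lemma is_series_zero : @is_series C_AbsRing C_NormedModule (fun _ : nat => RtoC 0) (RtoC 0).
Proof.
  unfold is_series.
  apply filterlim_ext with (fun _ => RtoC 0).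
  - intros n. induction n.
    + rewrite sum_O. reflexivity.
    + rewrite sum_Sn, <- IHn. change (@eq C 0 (0 + 0)). ring.
  - apply filterlim_const.
Qed.

Lemma is_series_delta (x : C) (m0 : nat) :
  @is_series C_AbsRing C_NormedModule (fun m => if Nat.eqb m m0 then x else RtoC 0) x.
Proof.
  revert x. induction m0; intros x.
  - apply is_series_decr_1. simpl.
    eapply is_series_eq; [apply is_series_zero|]. change (@eq C 0 (x + - x)). ring.
  - apply is_series_decr_1. simpl.
    eapply is_series_eq; [apply IHm0|]. change (@eq C x (x + - 0)). ring.
Qed.

Lemma pow_swap (w : C) (n m p : nat) : (w ^ n) ^ m * (w ^ p) ^ n = (w ^ (m + p)) ^ n.
Proof.
  rewrite <- !Cpow_mult_r. rewrite <- Cpow_add_r. f_equal. lia.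
Qed.

Section Avg.
Variable e : nat -> C.
Variable H : C -> C.
Hypothesis HS : forall z, in_U z -> z <> 0 -> is_series (fun m => e m * z ^ m) (H z).
Variable r : R.
Hypothesis Hr : (0 < r < 1)%R.
Variable N : nat.

Lemma pt_in_U j : in_U (RtoC r * om N ^ j) /\ RtoC r * om N ^ j <> 0.
Proof.
  assert (E : Cmod (RtoC r * om N ^ j) = r).
  { rewrite Cmod_mult, Cmod_om_pow, Cmod_R, Rabs_pos_eq; lra. }
  split.
  - unfold in_U. rewrite E. lra.
  - intro Z. rewrite Z, Cmod_0 in E. lra.
Qed.

Lemma avg_series (p n : nat) :
  is_series (fun m => e m * RtoC r ^ m * fs (fun j => (om N ^ (m + p)) ^ j) n)
            (fs (fun j => (om N ^ p) ^ j * H (RtoC r * om N ^ j)) n).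
Proof.
  induction n.
  - simpl fs.
    destruct (pt_in_U 0) as [H1 H2].
    pose proof (@is_series_scal C_AbsRing C_NormedModule (RtoC 0) _ _ (HS _ H1 H2)) as Z.
    eapply is_series_ext; [| eapply is_series_eq; [exact Z|]].
    + intros m. change (@eq C (0 * (e m * (RtoC r * om N ^ 0) ^ m)) (e m * RtoC r ^ m * 0)). ring.
    + change (@eq C (0 * H (RtoC r * om N ^ 0)) 0). ring.
  - destruct (pt_in_U n) as [H1 H2].
    pose proof (@is_series_scal C_AbsRing C_NormedModule ((om N ^ p) ^ n) _ _ (HS _ H1 H2)) as Z.
    pose proof (is_series_plus _ _ _ _ IHn Z) as P.
    eapply is_series_ext; [| eapply is_series_eq; [exact P|]].
    + intros m. cbv beta.
      change (@eq C (e m * RtoC r ^ m * fs (fun j => (om N ^ (m + p)) ^ j) n + (om N ^ p) ^ n * (e m * (RtoC r * om N ^ n) ^ m))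
               (e m * RtoC r ^ m * fs (fun j => (om N ^ (m + p)) ^ j) (S n))).
      simpl fs. rewrite Cpow_mult_l, <- (pow_swap (om N) n m p).
      ring.
    + reflexivity.
Qed.

Variable B Q : R.
Hypothesis HQ : (0 <= Q < 1)%R.
Hypothesis HB : forall m, (Cmod (e m) * r ^ m <= B * (Q ^ m * Q ^ m))%R.

Lemma avg_bound (p m0 : nat) : (0 < N)%nat -> (m0 < N)%nat -> ((m0 + p) mod N = 0)%nat ->
  (Cmod (fs (fun j => (om N ^ p) ^ j * H (RtoC r * om N ^ j)) N - RtoC (INR N) * e m0 * RtoC r ^ m0)%C
    <= INR N * B * Q ^ N * / (1 - Q))%R.
Proof.
  intros HN Hm0 Hmod.
  assert (HB0 : (0 <= B)%R).
  { specialize (HB 0%nat). simpl in HB. pose proof (Cmod_ge_0 (e 0%nat)). lra. }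
  pose proof (is_series_minus _ _ _ _ (avg_series p N) (is_series_delta (RtoC (INR N) * e m0 * RtoC r ^ m0) m0)) as P.
  eapply ser_norm_le.
  - exact P.
  - apply (@is_series_scal R_AbsRing R_NormedModule (INR N * B * Q ^ N)%R).
    apply is_series_geom. rewrite Rabs_pos_eq; lra.
  - intros m. cbv beta.
    change (scal (INR N * B * Q ^ N)%R (Q ^ m)%R) with (INR N * B * Q ^ N * Q ^ m)%R.
    change (plus ?a (opp ?b)) with (a - b).
    pose proof (pos_INR N) as HN0.
    assert (Hv : (0 <= INR N * B * Q ^ N * Q ^ m)%R).
    { apply Rmult_le_pos; [apply Rmult_le_pos; [apply Rmult_le_pos|]|]; try lra; apply pow_le; lra. }
    destruct (Nat.eqb m m0) eqn:Em.
    + apply Nat.eqb_eq in Em. subst m.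
      rewrite rsum_div by (try exact HN; exact Hmod).
      replace (e m0 * RtoC r ^ m0 * RtoC (INR N) - RtoC (INR N) * e m0 * RtoC r ^ m0) with (RtoC 0) by ring.
      rewrite Cmod_0. exact Hv.
    + destruct (Nat.eq_dec ((m + p) mod N) 0) as [Hd|Hd].
      * rewrite rsum_div by (try exact HN; exact Hd).
        assert (HmN : (N <= m)%nat).
        { apply Nat.eqb_neq in Em.
          destruct (Nat.le_gt_cases N m) as [?|Hlt]; [assumption|]. exfalso.
          pose proof (Nat.div_mod_eq (m + p) N) as D1. pose proof (Nat.div_mod_eq (m0 + p) N) as D2.
          rewrite Hd in D1. rewrite Hmod in D2.
          set (q1 := ((m + p) / N)%nat) in *. set (q2 := ((m0 + p) / N)%nat) in *.
          destruct (Nat.lt_total q1 q2) as [Hq|[Hq|Hq]].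
          - assert (N * q1 + N <= N * q2)%nat by nia. lia.
          - subst q1. lia.
          - assert (N * q2 + N <= N * q1)%nat by nia. lia. }
        replace (e m * RtoC r ^ m * RtoC (INR N) - 0) with (RtoC (INR N) * (e m * RtoC r ^ m)) by ring.
        rewrite Cmod_mult, Cmod_mult, Cmod_R, Rabs_pos_eq by lra.
        rewrite Cmod_pow, Cmod_R, Rabs_pos_eq by lra.
        specialize (HB m).
        assert (HQm : (Q ^ m <= Q ^ N)%R).
        { replace m with (N + (m - N))%nat by lia. rewrite pow_add.
          rewrite <- (Rmult_1_r (Q ^ N)) at 2. apply Rmult_le_compat_l; [apply pow_le; lra|].
          rewrite <- (pow1 (m - N)). apply pow_incr; lra. }
        assert (HQ0 : (0 <= Q ^ m)%R) by (apply pow_le; lra).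
        apply Rmult_le_compat_l with (r := INR N) in HB; [|lra].
        eapply Rle_trans; [exact HB|].
        replace (INR N * (B * (Q ^ m * Q ^ m)))%R with (INR N * B * Q ^ m * Q ^ m)%R by ring.
        apply Rmult_le_compat_r; [lra|].
        apply Rmult_le_compat_l; [apply Rmult_le_pos; lra | exact HQm].
      * rewrite rsum_ndiv by (try exact HN; exact Hd).
        replace (e m * RtoC r ^ m * 0 - 0) with (RtoC 0) by ring.
        rewrite Cmod_0. exact Hv.
Qed.

End Avg.

Open Scope C_scope.

Lemma W_ident (h : nat -> C) (w : C) (b : R) n :
  fs (fun j => RtoC (Re (h j) - b) * w ^ j) n =
  / 2 * (fs (fun j => w ^ j * h j) n + Cconj (fs (fun j => (Cconj w) ^ j * h j) n))
  - RtoC b * fs (fun j => w ^ j) n.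
Proof.
  induction n; cbn [fs].
  - replace (Cconj 0) with (RtoC 0).
    + ring.
    + apply injective_projections; simpl; ring.
  - rewrite IHn, Cplus_conj, Cmult_conj, Cpow_conj, Cconj_conj.
    rewrite RtoC_minus, re_alt.
    field.
Qed.

Lemma fsR_minus_const f b n : fsR (fun j => (f j - b)%R) n = (fsR f n - INR n * b)%R.
Proof.
  induction n; cbn [fsR]; [simpl; ring|]. rewrite IHn, S_INR. ring.
Qed.

Lemma fsR_ext f g n : (forall j, (j < n)%nat -> f j = g j) -> fsR f n = fsR g n.
Proof.
  induction n; intros H; simpl; [reflexivity|].
  rewrite IHn by (intros; apply H; lia). rewrite H by lia. reflexivity.
Qed.

Lemma carath_N (e : nat -> C) (H : C -> C) (b : R) (k : nat) (r M Q : R) (N : nat) :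
  (forall z, in_U z -> z <> 0 -> is_series (fun m => e m * z ^ m) (H z)) ->
  (forall z, in_U z -> z <> 0 -> (b < Re (H z))%R) ->
  e 0%nat = 1 -> (1 <= k)%nat -> (k < N)%nat -> (0 < r < 1)%R -> (0 <= Q < 1)%R ->
  (forall m, (Cmod (e m) * r ^ m <= M * (Q ^ m * Q ^ m))%R) ->
  (Cmod (e k) * r ^ k <= 2 * (1 - b) + 4 * M * Q ^ N / (1 - Q) + M * (Q ^ (N - k) * Q ^ (N - k)))%R.
Proof.
  intros HS HRe He0 Hk HkN Hr HQ HB.
  assert (HN : (0 < N)%nat) by lia.
  set (Hj := fun j => H (RtoC r * om N ^ j)).
  set (A1 := fs (fun j => (om N ^ ((N - 1) * k)) ^ j * Hj j) N).
  set (A2 := fs (fun j => (om N ^ k) ^ j * Hj j) N).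
  set (A0 := fs (fun j => (om N ^ 0) ^ j * Hj j) N).
  set (T := (INR N * M * Q ^ N * / (1 - Q))%R).
  assert (b1 : (Cmod (A1 - RtoC (INR N) * e k * RtoC r ^ k) <= T)%R).
  { apply (avg_bound e H HS r Hr N M Q HQ HB); try lia.
    replace (k + (N - 1) * k)%nat with (k * N)%nat by nia. apply Nat.Div0.mod_mul. }
  assert (b2 : (Cmod (A2 - RtoC (INR N) * e (N - k)%nat * RtoC r ^ (N - k)) <= T)%R).
  { apply (avg_bound e H HS r Hr N M Q HQ HB); try lia.
    replace (N - k + k)%nat with N by lia. apply Nat.Div0.mod_same. }
  assert (b0 : (Cmod (A0 - RtoC (INR N) * e 0%nat * RtoC r ^ 0) <= T)%R).
  { apply (avg_bound e H HS r Hr N M Q HQ HB); try lia. apply Nat.Div0.mod_0_l. }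
  set (w := Cconj (om N) ^ k).
  assert (Hw : w = om N ^ ((N - 1) * k)).
  { unfold w. rewrite conj_om by exact HN. rewrite Cpow_mult_r. reflexivity. }
  assert (Hcw : Cconj w = om N ^ k).
  { unfold w. rewrite Cpow_conj, Cconj_conj. reflexivity. }
  set (W := fs (fun j => RtoC (Re (Hj j) - b) * w ^ j) N).
  assert (EW : W = / 2 * (A1 + Cconj A2)).
  { unfold W. rewrite W_ident, Hcw.
    rewrite Hw, rsum_ndiv by (try exact HN; intro Hm;
      pose proof (Nat.div_mod_eq ((N - 1) * k) N) as D; rewrite Hm in D;
      set (q := (((N - 1) * k) / N)%nat) in *;
      destruct (Nat.le_gt_cases k q) as [Hq|Hq]; nia).
    unfold A1, A2. ring. }
  assert (Hpos : forall j, (b < Re (Hj j))%R).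
  { intros j. destruct (pt_in_U r Hr N j) as [U1 U2]. apply HRe; assumption. }
  assert (HWb : (Cmod W <= Re A0 - INR N * b)%R).
  { eapply Rle_trans; [apply fs_norm|].
    assert (E0 : Re A0 = fsR (fun j => Re (Hj j)) N).
    { unfold A0. rewrite fs_Re. apply fsR_ext. intros j _. simpl Cpow at 1.
      rewrite Cpow_1_l, Cmult_1_l. reflexivity. }
    rewrite E0, <- fsR_minus_const. apply fsR_le. intros j _.
    rewrite Cmod_mult, Cmod_R, Cmod_pow, Rabs_pos_eq.
    - unfold w. rewrite Cmod_pow, Cmod_conj. replace (om N) with (om N ^ 1) by apply Cpow_1_r.
      rewrite Cmod_om_pow, !pow1. lra.
    - specialize (Hpos j). lra. }
  assert (HNr : (0 < INR N)%R) by (apply lt_0_INR; lia).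
  assert (HrK : forall m, Cmod (RtoC (INR N) * e m * RtoC r ^ m) = (INR N * (Cmod (e m) * r ^ m))%R).
  { intros m. rewrite !Cmod_mult, Cmod_pow, !Cmod_R, !Rabs_pos_eq by lra. ring. }
  assert (s2 : (Cmod (RtoC (INR N) * e k * RtoC r ^ k) <= Cmod A1 + T)%R).
  { replace (RtoC (INR N) * e k * RtoC r ^ k) with (A1 + - (A1 - RtoC (INR N) * e k * RtoC r ^ k)) by ring.
    eapply Rle_trans; [apply Cmod_triangle|]. rewrite Cmod_opp. lra. }
  assert (s3 : (Cmod A1 <= Cmod (A1 + Cconj A2) + Cmod A2)%R).
  { replace A1 with ((A1 + Cconj A2) + - Cconj A2) at 1 by ring.
    eapply Rle_trans; [apply Cmod_triangle|]. rewrite Cmod_opp, Cmod_conj. lra. }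
  assert (s4 : Cmod (A1 + Cconj A2) = (2 * Cmod W)%R).
  { rewrite EW. replace (A1 + Cconj A2) with (RtoC 2 * (/ 2 * (A1 + Cconj A2))) at 1.
    - rewrite Cmod_mult, Cmod_R, Rabs_pos_eq by lra. reflexivity.
    - field. }
  assert (s5 : (Re A0 <= INR N + T)%R).
  { assert (E : Re A0 = (INR N + Re (A0 - RtoC (INR N) * e 0%nat * RtoC r ^ 0))%R).
    { rewrite He0. unfold Re. simpl. ring. }
    rewrite E. pose proof (re_le_Cmod (A0 - RtoC (INR N) * e 0%nat * RtoC r ^ 0)) as R1.
    apply Rabs_le_between in R1. lra. }
  assert (s6 : (Cmod A2 <= INR N * (M * (Q ^ (N - k) * Q ^ (N - k))) + T)%R).
  { replace A2 with ((A2 - RtoC (INR N) * e (N - k)%nat * RtoC r ^ (N - k)) + RtoC (INR N) * e (N - k)%nat * RtoC r ^ (N - k)) at 1 by ring.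
    eapply Rle_trans; [apply Cmod_triangle|]. rewrite HrK.
    pose proof (HB (N - k)%nat).
    assert (INR N * (Cmod (e (N - k)%nat) * r ^ (N - k)) <= INR N * (M * (Q ^ (N - k) * Q ^ (N - k))))%R
      by (apply Rmult_le_compat_l; lra).
    lra. }
  rewrite HrK in s2.
  apply (Rmult_le_reg_l (INR N)); [exact HNr|].
  assert (ET : (INR N * (2 * (1 - b) + 4 * M * Q ^ N / (1 - Q) + M * (Q ^ (N - k) * Q ^ (N - k))) =
               2 * INR N * (1 - b) + 4 * T + INR N * (M * (Q ^ (N - k) * Q ^ (N - k))))%R).
  { unfold T. field. lra. }
  rewrite ET. lra.
Qed.

Lemma lim_pow (x c K Q : R) : (0 <= Q < 1)%R -> (0 <= K)%R ->
  (forall n, (1 <= n)%nat -> (x <= c + K * Q ^ n)%R) -> (x <= c)%R.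
Proof.
  intros HQ HK H.
  destruct (Rle_dec x c) as [?|Hn]; [assumption|]. exfalso.
  apply Rnot_le_lt in Hn.
  assert (Hy : (0 < (x - c) / (K + 1))%R) by (apply Rdiv_lt_0_compat; lra).
  destruct (pow_lt_1_zero Q ltac:(rewrite Rabs_pos_eq; lra) _ Hy) as [N0 HN0].
  specialize (HN0 (S N0) ltac:(lia)). rewrite Rabs_pos_eq in HN0 by (apply pow_le; lra).
  specialize (H (S N0) ltac:(lia)).
  assert (H1 : (K * Q ^ S N0 <= K * ((x - c) / (K + 1)))%R) by (apply Rmult_le_compat_l; lra).
  assert (H2 : (K * ((x - c) / (K + 1)) < x - c)%R).
  { apply (Rmult_lt_reg_r (K + 1)); [lra|].
    replace (K * ((x - c) / (K + 1)) * (K + 1))%R with (K * (x - c))%R by (field; lra). nra. }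
  lra.
Qed.

Lemma bernoulli (r : R) (k : nat) : (0 <= r <= 1)%R -> (1 - INR k * (1 - r) <= r ^ k)%R.
Proof.
  intros Hr. induction k.
  - simpl. lra.
  - rewrite S_INR. simpl.
    assert (r * (1 - INR k * (1 - r)) <= r * r ^ k)%R by (apply Rmult_le_compat_l; lra).
    pose proof (pos_INR k). assert (0 <= INR k * ((1 - r) * (1 - r)))%R by (apply Rmult_le_pos; nra). nra.
Qed.

Lemma lim_r (x c : R) (k : nat) : (0 <= x)%R ->
  (forall r, (0 < r < 1)%R -> (x * r ^ k <= c)%R) -> (x <= c)%R.
Proof.
  intros Hx H.
  destruct (Rle_dec x c) as [?|Hn]; [assumption|]. exfalso.
  apply Rnot_le_lt in Hn.
  pose proof (pos_INR k) as Hk.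
  set (eps := Rmin (1 / 2) ((x - c) / (2 * (x * INR k + 1)))).
  assert (He1 : (eps <= 1 / 2)%R) by apply Rmin_l.
  assert (He2 : (eps <= (x - c) / (2 * (x * INR k + 1)))%R) by apply Rmin_r.
  assert (He0 : (0 < eps)%R).
  { apply Rmin_glb_lt; [lra|]. apply Rdiv_lt_0_compat; [lra|]. nra. }
  specialize (H (1 - eps)%R ltac:(lra)).
  pose proof (bernoulli (1 - eps) k ltac:(lra)) as Hb.
  replace (1 - (1 - eps))%R with eps in Hb by ring.
  assert (H1 : (x * (1 - INR k * eps) <= x * (1 - eps) ^ k)%R) by (apply Rmult_le_compat_l; lra).
  assert (H2 : (x * INR k * eps <= x * INR k * ((x - c) / (2 * (x * INR k + 1))))%R).
  { apply Rmult_le_compat_l; [nra | exact He2]. }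
  assert (H3 : (x * INR k * ((x - c) / (2 * (x * INR k + 1))) < (x - c) / 2)%R).
  { apply (Rmult_lt_reg_r (2 * (x * INR k + 1))); [nra|].
    replace (x * INR k * ((x - c) / (2 * (x * INR k + 1))) * (2 * (x * INR k + 1)))%R
      with (x * INR k * (x - c))%R by (field; nra).
    replace ((x - c) / 2 * (2 * (x * INR k + 1)))%R with ((x - c) * (x * INR k + 1))%R by field.
    nra. }
  nra.
Qed.

Lemma carath (e : nat -> C) (H : C -> C) (b : R) (k : nat) :
  (forall z, in_U z -> z <> 0 -> is_series (fun m => e m * z ^ m) (H z)) ->
  (forall z, in_U z -> z <> 0 -> (b < Re (H z))%R) ->
  e 0%nat = 1 -> (1 <= k)%nat -> (Cmod (e k) <= 2 * (1 - b))%R.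
Proof.
  intros HS HRe He0 Hk.
  apply (lim_r _ _ k (Cmod_ge_0 _)).
  intros r Hr.
  set (s := ((1 + r) / 2)%R).
  destruct (bnd_of_series e H HS s) as [M HM]; [unfold s; lra|].
  assert (HM0 : (0 <= M)%R).
  { specialize (HM 0%nat). pose proof (Cmod_ge_0 (e 0%nat)). simpl in HM. lra. }
  pose proof (geo_shift e M s r ltac:(lra) ltac:(unfold s; lra) HM) as G.
  set (q := (r / s)%R).
  assert (Hq : (0 < q < 1)%R).
  { unfold q, s. split; [apply Rdiv_lt_0_compat; lra|].
    apply (Rmult_lt_reg_r ((1 + r) / 2)); [lra|]. unfold Rdiv at 1. rewrite Rmult_assoc, Rinv_l; lra. }
  set (Q := sqrt q).
  assert (HQQ : (Q * Q = q)%R) by (apply sqrt_sqrt; lra).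
  assert (HQ0 : (0 <= Q)%R) by apply sqrt_pos.
  assert (HQ : (0 <= Q < 1)%R) by nra.
  assert (HB : forall m, (Cmod (e m) * r ^ m <= M * (Q ^ m * Q ^ m))%R).
  { intros m. specialize (G 0%nat m). simpl plus in G. fold q in G.
    rewrite <- HQQ, Rpow_mult_distr in G. simpl in G. rewrite Rdiv_1_r in G. exact G. }
  apply (lim_pow _ _ (4 * M / (1 - Q) + M) Q HQ).
  { assert (0 <= 4 * M / (1 - Q))%R by (apply Rdiv_le_0_compat; lra). lra. }
  intros n Hn.
  pose proof (carath_N e H b k r M Q (k + n) HS HRe He0 Hk ltac:(lia) Hr HQ HB) as C1.
  replace (k + n - k)%nat with n in C1 by lia.
  assert (Hqn : (0 <= Q ^ n <= 1)%R).
  { split; [apply pow_le; lra|]. rewrite <- (pow1 n). apply pow_incr; lra. }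
  assert (Hkn : (Q ^ (k + n) <= Q ^ n)%R).
  { rewrite pow_add. rewrite <- (Rmult_1_l (Q ^ n)) at 2. apply Rmult_le_compat_r; [lra|].
    rewrite <- (pow1 k). apply pow_incr; lra. }
  assert (H1 : (4 * M * Q ^ (k + n) / (1 - Q) <= 4 * M / (1 - Q) * Q ^ n)%R).
  { replace (4 * M / (1 - Q) * Q ^ n)%R with (4 * M * Q ^ n / (1 - Q))%R by (field; lra).
    unfold Rdiv. apply Rmult_le_compat_r; [apply Rlt_le, Rinv_0_lt_compat; lra|].
    apply Rmult_le_compat_l; lra. }
  assert (H2 : (M * (Q ^ n * Q ^ n) <= M * Q ^ n)%R).
  { apply Rmult_le_compat_l; [lra|]. nra. }
  lra.
Qed.

Open Scope C_scope.

Ltac ceq := match goal with |- ?x = ?y => change (@eq C x y) end.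

Lemma ser_plus (a b : nat -> C) (la lb : C) :
  is_series a la -> is_series b lb -> is_series (fun n => a n + b n) (la + lb).
Proof. intros H1 H2. exact (is_series_plus _ _ _ _ H1 H2). Qed.

Lemma ser_scal (c : C) (a : nat -> C) (l : C) :
  is_series a l -> is_series (fun n => c * a n) (c * l).
Proof. intros H. exact (@is_series_scal C_AbsRing C_NormedModule c _ _ H). Qed.

Lemma ser_delta (x : C) : is_series (fun m => if Nat.eqb m 0 then x else RtoC 0) x.
Proof. exact (is_series_delta x 0). Qed.

Lemma rusch0 (c : nat -> C) : c 0%nat = 0 -> c 1%nat = 1 -> forall k, rusch_coef 0 c k = c k.
Proof.
  intros H0 H1 k. destruct k as [|[|k]].
  - simpl. rewrite H0. reflexivity.
  - simpl. rewrite H1. reflexivity.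
  - unfold rusch_coef.
    change (RtoC (INR (fact (S k)) / (INR (fact (S k)) * INR 1))%R * c (S (S k)) = c (S (S k))).
    replace (INR (fact (S k)) / (INR (fact (S k)) * INR 1))%R with 1%R.
    + ring.
    + simpl INR at 3. field. apply INR_fact_neq_0.
Qed.

Definition Pc (lam gam : R) (k : nat) : R :=
  ((1 - lam) * (1 - gam) + (lam * (gam + 1) + gam) * INR (S k) + lam * gam * (INR k * INR (S k)))%R.

Definition ecoef (tau : C) (lam gam : R) (c : nat -> C) (k : nat) : C :=
  match k with 0%nat => 1 | S _ => / tau * RtoC (Pc lam gam k) * c (S k) end.

Lemma J_series (tau : C) (lam gam beta : R) (c : nat -> C) :
  c 0%nat = 0 -> c 1%nat = 1 -> tau <> 0 ->
  J_condition tau lam gam 0 beta c ->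
  exists Hf : C -> C,
    (forall z, in_U z -> z <> 0 -> is_series (fun k => ecoef tau lam gam c k * z ^ k) (Hf z)) /\
    (forall z, in_U z -> z <> 0 -> (beta < Re (Hf z))%R).
Proof.
  intros H0 H1 Ht [Rh [Rh1 [Rh2 HJ]]].
  exists (fun z => J_value tau lam gam z (Rh z) (Rh1 z) (Rh2 z)).
  assert (S0 : forall z, in_U z -> is_series (fun k => c k * z ^ k) (Rh z)).
  { intros z Hz. destruct (HJ z Hz) as [Hs _].
    eapply is_series_ext; [| exact Hs]. intros k. cbv beta. rewrite rusch0 by assumption. reflexivity. }
  assert (S1 : forall z, in_U z -> is_series (fun k => RtoC (INR (S k)) * c (S k) * z ^ k) (Rh1 z)).
  { intros z Hz. apply (deriv_series c Rh z (Rh1 z) S0 Hz). apply (HJ z Hz). }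
  assert (S2 : forall z, in_U z -> is_series (fun k => RtoC (INR (S k)) * (RtoC (INR (S (S k))) * c (S (S k))) * z ^ k) (Rh2 z)).
  { intros z Hz. apply (deriv_series (fun k => RtoC (INR (S k)) * c (S k)) Rh1 z (Rh2 z) S1 Hz). apply (HJ z Hz). }
  split.
  - intros z Hz Hz0.
    pose proof (ser_scal (/ z) _ _ (shift1 _ _ (S0 z Hz))) as sA.
    pose proof (S1 z Hz) as sB.
    assert (sC : is_series (fun k => RtoC (INR k * INR (S k)) * c (S k) * z ^ k) (z * Rh2 z)).
    { apply is_series_decr_1.
      eapply is_series_ext; [| eapply is_series_eq; [exact (ser_scal z _ _ (S2 z Hz))|]].
      - intros k. cbv beta. ceq. rewrite RtoC_mult, Cpow_S. ring.
      - change (@eq C (z * Rh2 z) (z * Rh2 z + - (RtoC (INR 0 * INR 1) * c 1%nat * z ^ 0))).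
        change (INR 0) with 0%R. rewrite Rmult_0_l. ring. }
    pose proof (ser_plus _ _ _ _ (ser_plus _ _ _ _ (ser_plus _ _ _ _
                 (ser_scal (RtoC ((1 - lam) * (1 - gam))) _ _ sA)
                 (ser_scal (RtoC (lam * (gam + 1) + gam)) _ _ sB))
                 (ser_scal (RtoC (lam * gam)) _ _ (ser_plus _ _ _ _ sC (ser_delta (- (2)))))) (ser_delta (- (1)))) as sT.
    pose proof (ser_plus _ _ _ _ (ser_delta 1) (ser_scal (/ tau) _ _ sT)) as sJ.
    eapply is_series_ext; [| eapply is_series_eq; [exact sJ|]].
    + intros k. destruct k as [|k]; cbn [Nat.eqb]; cbv beta; unfold ecoef; ceq.
      * rewrite H1. change (INR 0) with 0%R. change (INR 1) with 1%R.
        repeat rewrite ?RtoC_mult, ?RtoC_plus, ?RtoC_minus. simpl Cpow. ceq. field. split; assumption.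
      * unfold Pc. repeat rewrite ?RtoC_mult, ?RtoC_plus, ?RtoC_minus. rewrite !Cpow_S. ceq. field. split; assumption.
    + unfold J_value. ceq. rewrite H0. simpl Cpow. field. split; assumption.
  - intros z Hz Hz0. apply (HJ z Hz). exact Hz0.
Qed.

Open Scope C_scope.

Lemma F0 (F : C -> C) (c : nat -> C) : normalized_series F c -> F 0 = 0.
Proof.
  intros [H0 [_ HS]].
  assert (Hu : in_U 0) by (unfold in_U; rewrite Cmod_0; lra).
  pose proof (HS 0 Hu) as S.
  assert (Hz : @is_series R_AbsRing R_NormedModule (fun _ => 0%R) 0%R).
  { unfold is_series. apply filterlim_ext with (fun _ => 0%R).
    - intros n. induction n; [rewrite sum_O; reflexivity|]. rewrite sum_Sn, <- IHn.
      change (0 = 0 + 0)%R. ring.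
    - apply filterlim_const. }
  pose proof (ser_norm_le _ _ _ _ S Hz) as L.
  assert (L' : (Cmod (F 0) <= 0)%R).
  { apply L. intros n. destruct n.
    - rewrite H0. simpl. rewrite Cmult_0_l, Cmod_0. lra.
    - rewrite Cpow_S, Cmult_0_l, Cmult_0_r, Cmod_0. lra. }
  apply Cmod_eq_0. pose proof (Cmod_ge_0 (F 0)). lra.
Qed.

Lemma rem_bound (F : C -> C) (c : nat -> C) : normalized_series F c ->
  exists K, forall z, (Cmod z <= 1 / 2)%R -> z <> 0 ->
    (Cmod ((F z - z - c 2%nat * z ^ 2 - c 3%nat * z ^ 3) / z ^ 4) <= K)%R.
Proof.
  intros [H0 [H1 HS]].
  destruct (bnd_of_series c F (fun z Hz _ => HS z Hz) (3 / 4)) as [M HM]; [lra|].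
  pose proof (geo_shift c M (3 / 4) (1 / 2) ltac:(lra) ltac:(lra) HM 4%nat) as G.
  exists (M / (3 / 4) ^ 4 * / (1 - (1 / 2) / (3 / 4)))%R.
  intros z Hz Hz0.
  assert (HzU : in_U z) by (unfold in_U; lra).
  pose proof (ser_scal (/ z ^ 4) _ _ (shift1 _ _ (shift1 _ _ (shift1 _ _ (shift1 _ _ (HS z HzU)))))) as S4.
  assert (Hz4 : z ^ 4 <> 0) by (apply Cpow_nz; exact Hz0).
  assert (S5 : is_series (fun k => c (S (S (S (S k)))) * z ^ k) ((F z - z - c 2%nat * z ^ 2 - c 3%nat * z ^ 3) / z ^ 4)).
  { eapply is_series_ext; [| eapply is_series_eq; [exact S4|]].
    - intros k. cbv beta. ceq. rewrite !Cpow_S. field. exact Hz0.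
    - cbv beta. ceq. rewrite H0, H1. field. exact Hz0. }
  eapply ser_norm_le; [exact S5| |].
  - apply (@is_series_scal R_AbsRing R_NormedModule (M / (3 / 4) ^ 4)%R).
    apply is_series_geom. rewrite Rabs_pos_eq; lra.
  - intros k. change (scal (M / (3 / 4) ^ 4)%R (((1 / 2) / (3 / 4)) ^ k)%R) with (M / (3 / 4) ^ 4 * ((1 / 2) / (3 / 4)) ^ k)%R.
    specialize (G k). simpl plus in G.
    cbv beta. rewrite Cmod_mult, Cmod_pow.
    eapply Rle_trans; [| exact G].
    apply Rmult_le_compat_l; [apply Cmod_ge_0|]. apply pow_incr. split; [apply Cmod_ge_0|lra].
Qed.

Lemma cm_add (x y : C) X Y : (Cmod x <= X)%R -> (Cmod y <= Y)%R -> (Cmod (x + y) <= X + Y)%R.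
Proof. intros. eapply Rle_trans; [apply Cmod_triangle|]. lra. Qed.
Lemma cm_mul (x y : C) X Y : (Cmod x <= X)%R -> (Cmod y <= Y)%R -> (Cmod (x * y) <= X * Y)%R.
Proof. intros. rewrite Cmod_mult. apply Rmult_le_compat; try apply Cmod_ge_0; assumption. Qed.
Lemma cm_opp (x : C) X : (Cmod x <= X)%R -> (Cmod (- x) <= X)%R.
Proof. intros. rewrite Cmod_opp. exact H. Qed.
Lemma cm_refl (x : C) : (Cmod x <= Cmod x)%R.
Proof. lra. Qed.

Ltac bnd := first [ apply cm_add; bnd | apply cm_mul; bnd | apply cm_opp; bnd | eassumption | apply cm_refl ].

Lemma zero_of_small (X : C) (K t0 : R) : (0 < t0)%R ->
  (forall t, (0 < t < t0)%R -> (Cmod X <= t * K)%R) -> X = 0.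
Proof.
  intros Ht0 H. apply Cmod_eq_0.
  pose proof (Cmod_ge_0 X).
  destruct (Req_dec (Cmod X) 0) as [?|Hn]; [assumption|]. exfalso.
  set (t := Rmin (t0 / 2) (Cmod X / (2 * (Rabs K + 1)))).
  pose proof (Rabs_pos K).
  assert (Ht1 : (t <= t0 / 2)%R) by apply Rmin_l.
  assert (Ht2 : (t <= Cmod X / (2 * (Rabs K + 1)))%R) by apply Rmin_r.
  assert (Ht : (0 < t)%R).
  { apply Rmin_glb_lt; [lra|]. apply Rdiv_lt_0_compat; lra. }
  specialize (H t ltac:(lra)).
  assert (t * K <= t * Rabs K)%R by (apply Rmult_le_compat_l; [lra | apply Rle_abs]).
  assert (t * (Rabs K + 1) <= Cmod X / 2)%R.
  { apply (Rmult_le_compat_r (Rabs K + 1)) in Ht2; [|lra].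
    replace (Cmod X / (2 * (Rabs K + 1)) * (Rabs K + 1))%R with (Cmod X / 2)%R in Ht2 by (field; lra). exact Ht2. }
  nra.
Qed.

Lemma rem_ex (F : C -> C) (c : nat -> C) : normalized_series F c ->
  exists K, (0 <= K)%R /\ forall z, (Cmod z <= 1 / 2)%R -> z <> 0 ->
    exists R0, F z = z + c 2%nat * (z * z) + c 3%nat * (z * z * z) + z * z * z * z * R0 /\ (Cmod R0 <= K)%R.
Proof.
  intros HF. destruct (rem_bound F c HF) as [K HK].
  exists K. split.
  - assert (Hh : RtoC (1 / 2) <> 0) by (intro E; apply (f_equal fst) in E; simpl in E; lra).
    specialize (HK (RtoC (1 / 2)) ltac:(rewrite Cmod_R, Rabs_pos_eq; lra) Hh).
    eapply Rle_trans; [apply Cmod_ge_0 | exact HK].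
  - intros z Hz Hz0. exists ((F z - z - c 2%nat * z ^ 2 - c 3%nat * z ^ 3) / z ^ 4).
    split; [| apply HK; assumption].
    simpl Cpow. field. exact Hz0.
Qed.

Lemma inv_coefs (f g : C -> C) (a b : nat -> C) :
  normalized_series f a -> normalized_series g b -> extends_inverse f g ->
  b 2%nat = - a 2%nat /\ b 3%nat = 2 * a 2%nat * a 2%nat - a 3%nat.
Proof.
  intros Hf Hg Hinv.
  destruct (rem_ex f a Hf) as [Kf [HKf0 HKf]].
  destruct (rem_ex g b Hg) as [Kg [HKg0 HKg]].
  set (U2 := (1 + (Cmod (a 2%nat) + (Cmod (a 3%nat) + Kf)))%R).
  assert (HU2 : (1 <= U2)%R) by (unfold U2; pose proof (Cmod_ge_0 (a 2%nat)); pose proof (Cmod_ge_0 (a 3%nat)); lra).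
  set (t0 := (/ (2 * U2))%R).
  assert (Ht0 : (0 < t0 <= 1 / 2)%R).
  { unfold t0. split; [apply Rinv_0_lt_compat; lra|].
    apply (Rmult_le_reg_l (2 * U2)); [lra|]. rewrite Rinv_r by lra. lra. }
  assert (KEY : exists KW1 KW2 : R, forall t, (0 < t < t0)%R ->
     exists W1 W2 : C, (Cmod W1 <= KW1)%R /\ (Cmod W2 <= KW2)%R /\
       a 2%nat + b 2%nat = - (RtoC t * W1) /\
       (b 2%nat = - a 2%nat -> a 3%nat - 2 * a 2%nat * a 2%nat + b 3%nat = - (RtoC t * W2))).
  { eexists. eexists. intros t Ht.
    set (z := RtoC t).
    assert (Hzt : Cmod z = t) by (unfold z; rewrite Cmod_R, Rabs_pos_eq; lra).
    assert (Hz0 : z <> 0) by (intro E; rewrite E, Cmod_0 in Hzt; lra).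
    assert (Hz1 : (Cmod z <= 1)%R) by lra.
    assert (Hz2 : (Cmod z <= 1 / 2)%R) by lra.
    destruct (HKf z Hz2 Hz0) as [Rf [Ef HRf]].
    set (v' := a 3%nat + z * Rf).
    set (v := a 2%nat + z * v').
    set (u := 1 + z * v).
    assert (Efu : f z = z * u) by (rewrite Ef; unfold u, v, v'; ring).
    assert (Hu : (Cmod u <= U2)%R).
    { unfold U2. eapply Rle_trans.
      - unfold u, v, v'. apply cm_add; [apply cm_refl|]. apply cm_mul; [exact Hz1|].
        apply cm_add; [apply cm_refl|]. apply cm_mul; [exact Hz1|].
        apply cm_add; [apply cm_refl | apply cm_mul; [exact Hz1 | exact HRf]].
      - rewrite Cmod_1. lra. }
    assert (Hw : (Cmod (f z) <= 1 / 2)%R).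
    { rewrite Efu, Cmod_mult, Hzt.
      assert (t * Cmod u <= t * U2)%R by (apply Rmult_le_compat_l; lra).
      assert (t * U2 <= t0 * U2)%R by (apply Rmult_le_compat_r; lra).
      assert (t0 * U2 = 1 / 2)%R by (unfold t0; field; lra). lra. }
    assert (HzU : in_U z) by (unfold in_U; lra).
    assert (HwU : in_U (f z)) by (unfold in_U; lra).
    pose proof (Hinv z HzU HwU) as Egf.
    assert (Hw0 : f z <> 0).
    { intro E. rewrite E, (F0 g b Hg) in Egf. apply Hz0. symmetry. exact Egf. }
    destruct (HKg (f z) Hw Hw0) as [Rg [Eg HRg]].
    rewrite Eg, Efu in Egf. clear Eg Ef Efu.
    exists (v' + b 2%nat * (2 * v + z * (v * v)) + b 3%nat * (u * u * u) + z * (u * u * u * u) * Rg).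
    exists (Rf - 2 * a 2%nat * v' - a 2%nat * (v * v) + b 3%nat * (3 * v + 3 * z * (v * v) + z * z * (v * v * v)) + u * u * u * u * Rg).
    assert (E1 : a 2%nat + b 2%nat = - (z * (v' + b 2%nat * (2 * v + z * (v * v)) + b 3%nat * (u * u * u) + z * (u * u * u * u) * Rg))).
    { assert (Z2 : z * z * (a 2%nat + b 2%nat + z * (v' + b 2%nat * (2 * v + z * (v * v)) + b 3%nat * (u * u * u) + z * (u * u * u * u) * Rg)) = 0).
      { transitivity (z * u + b 2%nat * (z * u * (z * u)) + b 3%nat * (z * u * (z * u) * (z * u)) + z * u * (z * u) * (z * u) * (z * u) * Rg - z).
        - unfold u, v. ring.
        - rewrite Egf. ring. }
      assert (Hzz : z * z <> 0) by (apply Cmult_neq_0; exact Hz0).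
      apply (f_equal (fun x => / (z * z) * x)) in Z2.
      replace (/ (z * z) * (z * z * (a 2%nat + b 2%nat + z * (v' + b 2%nat * (2 * v + z * (v * v)) + b 3%nat * (u * u * u) + z * (u * u * u * u) * Rg))))
        with (a 2%nat + b 2%nat + z * (v' + b 2%nat * (2 * v + z * (v * v)) + b 3%nat * (u * u * u) + z * (u * u * u * u) * Rg)) in Z2 by (field; exact Hz0).
      rewrite Cmult_0_r in Z2.
      transitivity (a 2%nat + b 2%nat + z * (v' + b 2%nat * (2 * v + z * (v * v)) + b 3%nat * (u * u * u) + z * (u * u * u * u) * Rg) - z * (v' + b 2%nat * (2 * v + z * (v * v)) + b 3%nat * (u * u * u) + z * (u * u * u * u) * Rg)); [ring|].
      rewrite Z2. ring. }
    split; [| split; [| split]].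
    - unfold u, v, v'. bnd.
    - unfold u, v, v'. bnd.
    - exact E1.
    - intros Hb2. rewrite Hb2 in E1.
      match type of E1 with _ = - (z * ?W) =>
        assert (HW1 : W = 0);
        [ apply (f_equal (fun x => / z * (- x))) in E1;
          replace (/ z * (- - (z * W))) with W in E1 by (field; exact Hz0);
          rewrite <- E1; field; exact Hz0
        | transitivity (W - z * (Rf - 2 * a 2%nat * v' - a 2%nat * (v * v) + b 3%nat * (3 * v + 3 * z * (v * v) + z * z * (v * v * v)) + u * u * u * u * Rg));
          [ unfold u, v, v'; ring | rewrite HW1; ring ] ]
      end. }
  destruct KEY as [KW1 [KW2 HK]].
  assert (Hb2 : a 2%nat + b 2%nat = 0).
  { apply (zero_of_small _ KW1 t0); [lra|]. intros t Ht.
    destruct (HK t Ht) as [W1 [W2 [H1 [H2 [H3 H4]]]]].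
    rewrite H3, Cmod_opp, Cmod_mult, Cmod_R, Rabs_pos_eq by lra.
    apply Rmult_le_compat_l; lra. }
  assert (Hb2' : b 2%nat = - a 2%nat).
  { transitivity (a 2%nat + b 2%nat - a 2%nat); [ring|]. rewrite Hb2. ring. }
  assert (Hb3 : a 3%nat - 2 * a 2%nat * a 2%nat + b 3%nat = 0).
  { apply (zero_of_small _ KW2 t0); [lra|]. intros t Ht.
    destruct (HK t Ht) as [W1 [W2 [H1 [H2 [H3 H4]]]]].
    rewrite (H4 Hb2'), Cmod_opp, Cmod_mult, Cmod_R, Rabs_pos_eq by lra.
    apply Rmult_le_compat_l; lra. }
  split; [exact Hb2'|].
  transitivity (a 3%nat - 2 * a 2%nat * a 2%nat + b 3%nat + (2 * a 2%nat * a 2%nat - a 3%nat)); [ring|].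
  rewrite Hb3. ring.
Qed.

Open Scope C_scope.

Lemma J_bounds (tau : C) (lam gam beta : R) (c : nat -> C) :
  c 0%nat = 0 -> c 1%nat = 1 -> tau <> 0 -> J_condition tau lam gam 0 beta c ->
  (Cmod (/ tau * RtoC (1 + lam + gam + 5 * lam * gam) * c 2%nat) <= 2 * (1 - beta))%R /\
  (Cmod (/ tau * RtoC (1 + 2 * (lam + gam + 5 * lam * gam)) * c 3%nat) <= 2 * (1 - beta))%R.
Proof.
  intros H0 H1 Ht HJ.
  destruct (J_series tau lam gam beta c H0 H1 Ht HJ) as [Hf [HS HRe]].
  split.
  - pose proof (carath _ Hf beta 1 HS HRe eq_refl ltac:(lia)) as K.
    unfold ecoef in K.
    replace (Pc lam gam 1) with (1 + lam + gam + 5 * lam * gam)%R in K by (unfold Pc; simpl INR; ring).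
    exact K.
  - pose proof (carath _ Hf beta 2 HS HRe eq_refl ltac:(lia)) as K.
    unfold ecoef in K.
    replace (Pc lam gam 2) with (1 + 2 * (lam + gam + 5 * lam * gam))%R in K by (unfold Pc; simpl INR; ring).
    exact K.
Qed.

Lemma cmod_coef (tau x : C) (A : R) : tau <> 0 -> (0 < A)%R ->
  Cmod (/ tau * RtoC A * x) = (A * Cmod x / Cmod tau)%R.
Proof.
  intros Ht HA. rewrite !Cmod_mult, Cmod_inv by exact Ht. rewrite Cmod_R, Rabs_pos_eq by lra.
  field. intro E. apply Ht. apply Cmod_eq_0. exact E.
Qed.

Theorem corollary7 (lam gam beta : R) (tau : C) (f : C -> C) (a : nat -> C) :
  (0 <= lam)%R -> (0 <= gam <= 1)%R -> (0 <= beta < 1)%R -> tau <> 0 ->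
  Theta_Sigma tau lam gam 0 beta f a ->
  (Cmod (a 2%nat) <=
     Rmin (2 * Cmod tau * (1 - beta) / (1 + lam + gam + 5 * lam * gam))
          (sqrt (2 * Cmod tau * (1 - beta) /
                 (1 + 2 * (lam + gam + 5 * lam * gam)))))%R /\
  (Cmod (a 3%nat) <=
     2 * Cmod tau * (1 - beta) / (1 + 2 * (lam + gam + 5 * lam * gam)))%R.
Proof.
  intros Hl Hg Hb Ht [g [b [[Hfa [Huf [Hgb [Hug Hinv]]]] [Ja Jb]]]].
  pose proof Hfa as [Ha0 [Ha1 _]]. pose proof Hgb as [Hb0 [Hb1 _]].
  destruct (J_bounds tau lam gam beta a Ha0 Ha1 Ht Ja) as [Ja1 Ja2].
  destruct (J_bounds tau lam gam beta b Hb0 Hb1 Ht Jb) as [Jb1 Jb2].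
  destruct (inv_coefs f g a b Hfa Hgb Hinv) as [E2 E3].
  set (A := (1 + lam + gam + 5 * lam * gam)%R) in *.
  set (B := (1 + 2 * (lam + gam + 5 * lam * gam))%R) in *.
  assert (HA : (0 < A)%R) by (unfold A; nra).
  assert (HB : (0 < B)%R) by (unfold B; nra).
  assert (Hct : (0 < Cmod tau)%R).
  { pose proof (Cmod_ge_0 tau). destruct (Req_dec (Cmod tau) 0) as [E|E]; [|lra].
    exfalso. apply Ht, Cmod_eq_0, E. }
  assert (Hsum : (Cmod (/ tau * RtoC B * (2 * (a 2%nat * a 2%nat))) <= 4 * (1 - beta))%R).
  { replace (/ tau * RtoC B * (2 * (a 2%nat * a 2%nat))) with (/ tau * RtoC B * a 3%nat + / tau * RtoC B * b 3%nat)
      by (rewrite E3; ring).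
    eapply Rle_trans; [apply Cmod_triangle|]. lra. }
  rewrite cmod_coef in Ja1, Ja2 by assumption.
  rewrite cmod_coef in Hsum by assumption.
  rewrite Cmod_mult, Cmod_mult in Hsum.
  replace (Cmod 2) with 2%R in Hsum by (rewrite Cmod_R, Rabs_pos_eq; lra).
  pose proof (Cmod_ge_0 (a 2%nat)) as Ha2. pose proof (Cmod_ge_0 (a 3%nat)) as Ha3.
  assert (K1 : (Cmod (a 2%nat) <= 2 * Cmod tau * (1 - beta) / A)%R).
  { apply (Rmult_le_reg_r (A / Cmod tau)). { apply Rdiv_lt_0_compat; lra. }
    replace (2 * Cmod tau * (1 - beta) / A * (A / Cmod tau))%R with (2 * (1 - beta))%R by (field; lra).
    replace (Cmod (a 2%nat) * (A / Cmod tau))%R with (A * Cmod (a 2%nat) / Cmod tau)%R by (field; lra).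
    exact Ja1. }
  assert (K3 : (Cmod (a 3%nat) <= 2 * Cmod tau * (1 - beta) / B)%R).
  { apply (Rmult_le_reg_r (B / Cmod tau)). { apply Rdiv_lt_0_compat; lra. }
    replace (2 * Cmod tau * (1 - beta) / B * (B / Cmod tau))%R with (2 * (1 - beta))%R by (field; lra).
    replace (Cmod (a 3%nat) * (B / Cmod tau))%R with (B * Cmod (a 3%nat) / Cmod tau)%R by (field; lra).
    exact Ja2. }
  assert (K2 : (Cmod (a 2%nat) * Cmod (a 2%nat) <= 2 * Cmod tau * (1 - beta) / B)%R).
  { apply (Rmult_le_reg_r (2 * B / Cmod tau)). { apply Rdiv_lt_0_compat; lra. }
    replace (2 * Cmod tau * (1 - beta) / B * (2 * B / Cmod tau))%R with (4 * (1 - beta))%R by (field; lra).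
    replace (Cmod (a 2%nat) * Cmod (a 2%nat) * (2 * B / Cmod tau))%R
      with (B * (2 * (Cmod (a 2%nat) * Cmod (a 2%nat))) / Cmod tau)%R by (field; lra).
    exact Hsum. }
  split; [| exact K3].
  apply Rmin_glb; [exact K1|].
  rewrite <- (sqrt_square (Cmod (a 2%nat))) by exact Ha2.
  apply sqrt_le_1_alt. exact K2.
Qed.
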